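(* Let $K\subset\mathbb{R}^d$ be compact and star-shaped, and for $x,y\in\mathbb{R}^d$ let $S(x,y)=\frac{x+y}2+\|x-y\|K$. Let $c>0$ and let $x,y,u,v\in\mathbb{R}^d$ satisfy $\|x-y\|\ge\|u-v\|$ and $\|\frac{x+y}2-\frac{u+v}2\|\le c\,\mathrm{diam}(K)\|x-y\|$. Then $$\mathrm{vol}(S(x,y)\setminus S(u,v))\ge\frac1{c+1}\frac{\mathrm{vol}(K)}{\mathrm{diam}(K)}\Big\|\frac{x+y}2-\frac{u+v}2\Big\|\,\|x-y\|^{d-1}.$$
   Context: $K$ star-shaped means $[0,z]\subset K$ for all $z\in K$. $\mathrm{diam}(K)=\sup\{\|u-v\|:u,v\in K\}$. *)

(* Defs.v *)
From HB Require Import structures.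
From mathcomp Require Import all_boot all_order all_algebra.
From mathcomp Require Import all_classical all_reals all_analysis.
Set Implicit Arguments. Unset Strict Implicit. Unset Printing Implicit Defensive.
Import Order.TTheory GRing.Theory Num.Theory.
Local Open Scope classical_set_scope.
Local Open Scope ring_scope.

Definition enorm (R : realType) (d : nat) (x : 'rV[R]_d) : R :=
  Num.sqrt (\sum_(i < d) x ord0 i ^+ 2).

Definition star_shaped (R : realType) (d : nat) (K : set 'rV[R]_d) : Prop :=
  forall z, K z -> forall t : R, 0 <= t <= 1 -> K (t *: z).

(* diam(K) = sup {||u - v|| : u, v in K} (as a real number; K will be compact,
   so this supremum is finite; for empty K the value is 0). *)
Definition diam (R : realType) (d : nat) (K : set 'rV[R]_d) : R :=
  fine (ereal_sup [set (enorm (u - v))%:E | u in K & v in K]).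

Definition box (R : realType) (d : nat) (a b : 'rV[R]_d) : set 'rV[R]_d :=
  [set z | forall i : 'I_d, a ord0 i <= z ord0 i <= b ord0 i].

Definition boxvol (R : realType) (d : nat) (a b : 'rV[R]_d) : R :=
  \prod_(i < d) Num.max 0 (b ord0 i - a ord0 i).

(* Lebesgue (outer) measure on R^d: infimum of the total volume of countable
   covers by boxes.  It coincides with Lebesgue measure on measurable sets. *)
Definition vol (R : realType) (d : nat) (A : set 'rV[R]_d) : \bar R :=
  ereal_inf [set s | exists a b : nat -> 'rV[R]_d,
    A `<=` \bigcup_k box (a k) (b k) /\
    s = (\sum_(0 <= k <oo) (boxvol (a k) (b k))%:E)%E].

Definition Sxy (R : realType) (d : nat) (K : set 'rV[R]_d) (x y : 'rV[R]_d)
  : set 'rV[R]_d :=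
  [set (2^-1 *: (x + y)) + enorm (x - y) *: k | k in K].

(* Main.v *)
Require Import Defs.
From HB Require Import structures.
From mathcomp Require Import all_boot all_order all_algebra.
From mathcomp Require Import all_classical all_reals all_analysis.
From mathcomp Require Import ring lra.
Import Order.TTheory GRing.Theory Num.Theory.
Import numFieldNormedType.Exports.
Local Open Scope classical_set_scope.
Local Open Scope ring_scope.



Lemma boxvol_ge0 (R : realType) (d : nat) (a b : 'rV[R]_d) : 0 <= boxvol a b.
Proof. by apply: prodr_ge0 => i _; rewrite le_max lexx. Qed.

Lemma vol_ge0 (R : realType) (d : nat) (A : set 'rV[R]_d) : (0 <= vol A)%E.
Proof.
apply/ereal_infP => s [a [b [_ ->]]]; apply: nneseries_ge0 => n _ _.
by rewrite lee_fin boxvol_ge0.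
Qed.

Lemma vol_le (R : realType) (d : nat) (A B : set 'rV[R]_d) :
  A `<=` B -> (vol A <= vol B)%E.
Proof.
move=> AB; apply: le_ereal_inf => s [a [b [hB ->]]]; exists a, b; split => //.
exact: subset_trans hB.
Qed.

Lemma boxvol_aff (R : realType) (d : nat) (a a' b' : 'rV[R]_d) (r : R) :
  0 < r -> boxvol (a + r *: a') (a + r *: b') = r ^+ d * boxvol a' b'.
Proof.
move=> r0; rewrite /boxvol -[in r ^+ d](card_ord d) -prodr_const -big_split /=.
apply: eq_bigr => i _; rewrite !mxE.
have -> : a ord0 i + r * b' ord0 i - (a ord0 i + r * a' ord0 i) = r * (b' ord0 i - a' ord0 i).
  by rewrite mulrBr; set p := a ord0 i; set q := r * b' ord0 i; set t := r * a' ord0 i;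
     rewrite opprD addrACA subrr add0r.
case: (leP 0 (b' ord0 i - a' ord0 i)) => h.
  by rewrite !max_r // mulr_ge0 // ltW.
rewrite !max_l ?mulr0 // ?ltW //.
by rewrite pmulr_rlt0.
Qed.

Definition aff (R : realType) (d : nat) (a : 'rV[R]_d) (r : R) (A : set 'rV[R]_d) :=
  [set a + r *: z | z in A].
Arguments aff {R d}.

Lemma vol_aff (R : realType) (d : nat) (a : 'rV[R]_d) (r : R) (A : set 'rV[R]_d) :
  0 < r -> (vol (aff a r A) <= (r ^+ d)%:E * vol A)%E.
Proof.
move=> r0.
have rd0 : 0 < r ^+ d by rewrite exprn_gt0.
have key : forall s, [set s | exists a b : nat -> 'rV[R]_d,
    A `<=` \bigcup_k box (a k) (b k) /\
    s = (\sum_(0 <= k <oo) (boxvol (a k) (b k))%:E)%E] s ->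
    (vol (aff a r A) <= (r ^+ d)%:E * s)%E.
  move=> s [a1 [b1 [hc ->]]].
  rewrite -nneseriesZl; last by move=> i _; rewrite lee_fin boxvol_ge0.
  apply: ereal_inf_lbound; exists (fun k => a + r *: a1 k), (fun k => a + r *: b1 k).
  split.
    move=> _ [z Az <-]; have [k _ hk] := hc z Az; exists k => // i.
    rewrite !mxE; have /andP[h1 h2] := hk i.
    by rewrite !lerD2l !ler_pM2l // h1 h2.
  by apply: eq_eseriesr => k _; rewrite boxvol_aff // EFinM.
have -> : vol (aff a r A) =
   ((r ^+ d)%:E * ((r ^+ d)^-1%:E * vol (aff a r A)))%E.
  by rewrite muleA -EFinM divff ?gt_eqF // mul1e.
rewrite lee_pmul2l // ?lte_fin //; apply/ereal_infP => s hs.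
have := key s hs.
rewrite -(@lee_pmul2l _ ((r ^+ d)^-1)%:E) ?lte_fin ?invr_gt0 //.
by rewrite muleA -EFinM mulVf ?gt_eqF // mul1e.
Qed.



Lemma interleave_le (R : realType) (f g : nat -> \bar R) :
  (forall n, 0 <= f n)%E -> (forall n, 0 <= g n)%E ->
  (\sum_(0 <= n <oo) (if odd n then g n./2 else f n./2) <=
   \sum_(0 <= n <oo) f n + \sum_(0 <= n <oo) g n)%E.
Proof.
move=> f0 g0.
have h0 : forall n, (0 <= (if odd n then g n./2 else f n./2))%E.
  by move=> n; case: ifP.
apply: lime_le; first exact: is_cvg_nneseries.
apply: nearW => M.
apply: (@le_trans _ _ (\sum_(0 <= i < M.*2) (if odd i then g i./2 else f i./2))%E).
  by apply: lee_sum_nneg_natr => [n _ _|]; rewrite ?h0 // -addnn leq_addr.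
have -> : (\sum_(0 <= i < M.*2) (if odd i then g i./2 else f i./2) =
          \sum_(0 <= i < M) (f i + g i))%E.
  elim: M => [|M IH]; first by rewrite !big_geq.
  rewrite doubleS !big_nat_recr //= IH /= odd_double /= uphalf_double doubleK.
  by rewrite addeA.
rewrite big_split /=; apply: leeD.
  exact: nneseries_lim_ge.
exact: nneseries_lim_ge.
Qed.

Lemma vol_union (R : realType) (d : nat) (A B : set 'rV[R]_d) :
  (vol (A `|` B) <= vol A + vol B)%E.
Proof.
have step : forall sA sB,
  [set s | exists a b : nat -> 'rV[R]_d, A `<=` \bigcup_k box (a k) (b k) /\
    s = (\sum_(0 <= k <oo) (boxvol (a k) (b k))%:E)%E] sA ->
  [set s | exists a b : nat -> 'rV[R]_d, B `<=` \bigcup_k box (a k) (b k) /\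
    s = (\sum_(0 <= k <oo) (boxvol (a k) (b k))%:E)%E] sB ->
  (vol (A `|` B) <= sA + sB)%E.
  move=> _ _ [a1 [b1 [h1 ->]]] [a2 [b2 [h2 ->]]].
  pose a := fun n => if odd n then a2 n./2 else a1 n./2.
  pose b := fun n => if odd n then b2 n./2 else b1 n./2.
  apply: (@le_trans _ _ (\sum_(0 <= n <oo) (boxvol (a n) (b n))%:E)%E).
    apply: ereal_inf_lbound; exists a, b; split => //.
    move=> z [Az|Bz].
      have [k _ hk] := h1 z Az; exists k.*2 => //.
      by rewrite /a /b odd_double doubleK.
    have [k _ hk] := h2 z Bz; exists k.*2.+1 => //.
    by rewrite /a /b /= odd_double /= uphalf_double.
  have -> : (\sum_(0 <= n <oo) (boxvol (a n) (b n))%:E =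
     \sum_(0 <= n <oo) (if odd n then (boxvol (a2 n./2) (b2 n./2))%:E
                         else (boxvol (a1 n./2) (b1 n./2))%:E))%E.
    by apply: eq_eseriesr => n _; rewrite /a /b; case: ifP.
  by apply: (@interleave_le R (fun n => (boxvol (a1 n) (b1 n))%:E)
                           (fun n => (boxvol (a2 n) (b2 n))%:E)) => n;
     rewrite lee_fin boxvol_ge0.
have vA := @vol_ge0 R d A; have vB := @vol_ge0 R d B.
have [EA|fA] : vol A = +oo%E \/ vol A \is a fin_num.
  by case: (vol A) vA => [xa| |] //= _; [right|left].
  by rewrite EA; case: (vol B) vB => [xb| |] //= _; rewrite leey.
have [EB|fB] : vol B = +oo%E \/ vol B \is a fin_num.
  by case: (vol B) vB => [xb| |] //= _; [right|left].
  by rewrite EB addeC; case: (vol A) vA => [xa| |] //= _; rewrite leey.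
rewrite -leeBlDr //.
rewrite [X in (_ <= X)%E]/vol; apply/ereal_infP => sA hA.
rewrite leeBlDr //.
have sA0 : (0 <= sA)%E.
  by case: hA => a [b [_ ->]]; apply: nneseries_ge0 => n _ _; rewrite lee_fin boxvol_ge0.
have [->|fsA] : sA = +oo%E \/ sA \is a fin_num.
  by case: sA sA0 {hA} => [xs| |] //= _; [right|left].
  by rewrite addeC /=; case: (vol B) fB => //= *; rewrite leey.
rewrite addeC -leeBlDr //.
rewrite [X in (_ <= X)%E]/vol; apply/ereal_infP => sB hB.
by rewrite leeBlDr // addeC; exact: step.
Qed.



Definition chain (R : realType) (d : nat) (w : 'rV[R]_d) (E : set 'rV[R]_d) (n : nat) :=
  [set z | exists2 i, (i < n)%N & aff (i%:R *: w) 1 E z].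
Arguments chain {R d}.

Lemma vol_chain (R : realType) (d : nat) (w : 'rV[R]_d) (E : set 'rV[R]_d) (n : nat) :
  (vol (chain w E n.+1) <= n.+1%:R%:E * vol E)%E.
Proof.
have vE := @vol_ge0 R d E.
have h1 : forall a, (vol (aff a 1 E) <= vol E)%E.
  by move=> a; apply: le_trans (@vol_aff _ _ a 1 E ltr01) _; rewrite expr1n mul1e.
elim: n => [|n IH].
  rewrite mul1e; apply: le_trans (h1 0) ; apply: vol_le.
  by move=> z [i]; rewrite ltnS leqn0 => /eqP -> ; rewrite scale0r.
apply: (@le_trans _ _ (vol (chain w E n.+1 `|` aff (n.+1%:R *: w) 1 E))).
  apply: vol_le => z [i]; rewrite ltnS leq_eqVlt => /orP[/eqP -> h|hi h].
    by right.
  by left; exists i.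
apply: le_trans (@vol_union _ _ _ _) _.
apply: le_trans (leeD IH (h1 _)) _.
by rewrite [in X in (_ <= X)%E]mulrS EFinD addeC addeC ge0_muleDl // mul1e addeC.
Qed.

Lemma cover_chain (R : realType) (d : nat) (w : 'rV[R]_d) (K : set 'rV[R]_d) (N : nat) :
  (forall z, K z -> ~ K (z - N%:R *: w)) ->
  K `<=` chain w (K `\` aff w 1 K) N.
Proof.
move=> hdis z Kz.
suff : forall n j, (j + n = N)%N -> K (z - j%:R *: w) ->
   exists2 i, (i < N)%N & K (z - i%:R *: w) /\ ~ K (z - i.+1%:R *: w).
  case/(_ N 0%N (add0n N)); first by rewrite scale0r subr0.
  move=> i iN [h1 h2]; exists i => //.
  exists (z - i%:R *: w); last by rewrite scale1r addrC subrK.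
  split => // -[k Kk hk]; apply: h2.
  suff -> : z - i.+1%:R *: w = k by [].
  by rewrite [i.+1%:R]mulrSr scalerDl scale1r opprD addrA -hk scale1r addrC addKr.
elim => [|n IH] j.
  by rewrite addn0 => -> /(hdis z Kz).
move=> hj hK.
have [h|h] := pselect (K (z - j.+1%:R *: w)).
  have [|i iN hi] := IH j.+1 _ h; first by rewrite addSnnS.
  by exists i.
by exists j => //; rewrite -hj addnS ltnS leq_addr.
Qed.



Lemma enorm_ge0 (R : realType) (d : nat) (x : 'rV[R]_d) : 0 <= enorm x.
Proof. exact: sqrtr_ge0. Qed.

Lemma enormZ (R : realType) (d : nat) (a : R) (x : 'rV[R]_d) :
  enorm (a *: x) = `|a| * enorm x.
Proof.
rewrite /enorm.
have -> : \sum_(i < d) (a *: x) ord0 i ^+ 2 = a ^+ 2 * \sum_(i < d) x ord0 i ^+ 2.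
  by rewrite mulr_sumr; apply: eq_bigr => i _; rewrite mxE exprMn.
by rewrite sqrtrM ?sqr_ge0 // sqrtr_sqr.
Qed.

Lemma enormB (R : realType) (d : nat) (x y : 'rV[R]_d) : enorm (x - y) = enorm (y - x).
Proof. by rewrite -opprB -scaleN1r enormZ normrN normr1 mul1r. Qed.

Lemma enorm_d0 (R : realType) (x : 'rV[R]_0) : enorm x = 0.
Proof. by rewrite /enorm big_ord0 sqrtr0. Qed.

Lemma diam_ub (R : realType) (d : nat) (K : set 'rV[R]_d) (a b : 'rV[R]_d) :
  0 < diam K -> K a -> K b -> enorm (a - b) <= diam K.
Proof.
rewrite /diam => D0 Ka Kb.
set S := [set (enorm (u - v))%:E | u in K & v in K] in D0 *.
have hub : ((enorm (a - b))%:E <= ereal_sup S)%E.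
  by apply: ereal_sup_ubound; exists a => //; exists b.
move: D0 hub; case: (ereal_sup S) => [e| |] //=; rewrite ?ltxx //.
Qed.

Theorem lemma4p2 (R : realType) (d : nat)
  (K : set 'rV[R]_d) (Kcompact : compact K) (Kstar : star_shaped K)
  (c : R) (hc : 0 < c) (x y u v : 'rV[R]_d)
  (hxy : enorm (u - v) <= enorm (x - y))
  (hmid : enorm (2^-1 *: (x + y) - 2^-1 *: (u + v))
            <= c * diam K * enorm (x - y)) :
  (((c + 1)^-1 * enorm (2^-1 *: (x + y) - 2^-1 *: (u + v))
      * enorm (x - y) ^+ d.-1 / diam K)%:E * vol K
   <= vol (Sxy K x y `\` Sxy K u v))%E.
Proof.
case: d K Kcompact Kstar x y u v hxy hmid => [|d] K Kcompact Kstar x y u v hxy hmid.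
  by rewrite enorm_d0 mulr0 mul0r mul0r mul0e; apply: vol_ge0.
set r := enorm (x - y) in hxy hmid *.
set r' := enorm (u - v) in hxy *.
set m := 2^-1 *: (x + y) in hmid *.
set m' := 2^-1 *: (u + v) in hmid *.
set del := enorm (m - m') in hmid *.
set D := diam K in hmid *.
set B := Sxy K x y `\` Sxy K u v.
set C := (c + 1)^-1 * del * r ^+ d / D.
have vB := @vol_ge0 R d.+1 B.
have vK := @vol_ge0 R d.+1 K.
have r0 : 0 <= r := @enorm_ge0 _ _ _.
have r'0 : 0 <= r' := @enorm_ge0 _ _ _.
have del0 : 0 <= del := @enorm_ge0 _ _ _.
have c10 : 0 < (c + 1)^-1 by rewrite invr_gt0; lra.
have [Cle0|Cgt0] := leP C 0.
  by apply: le_trans vB; apply: mule_le0_ge0.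
have Dgt0 : 0 < D.
  rewrite ltNge; apply/negP => hD; move: Cgt0; rewrite ltNge => /negP; apply.
  rewrite /C mulr_ge0_le0 ?invr_le0 //.
  by rewrite !mulr_ge0 // ?exprn_ge0 // ltW.
have delgt0 : 0 < del.
  rewrite lt_neqAle del0 andbT; apply/negP => /eqP h; move: Cgt0.
  by rewrite /C -h mulr0 !mul0r ltxx.
have rgt0 : 0 < r.
  rewrite lt_neqAle r0 andbT; apply/negP => /eqP h; move: hmid.
  by rewrite -h mulr0 leNgt delgt0.
set w := r^-1 *: (m' - m).
set s := r' / r.
set dl := enorm w.
have dlE : dl = del / r.
  by rewrite /dl /w enormZ ger0_norm ?invr_ge0 // enormB mulrC.
have dlgt0 : 0 < dl by rewrite dlE divr_gt0.
set n := Num.truncn (D / dl).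
have hN1 : D / dl < n.+1%:R := truncnS_gt _.
have hN2 : n%:R <= D / dl by rewrite truncn_le divr_ge0 // ltW.
have hdis : forall z, K z -> ~ K (z - n.+1%:R *: w).
  move=> z Kz Kz'; have := @diam_ub _ _ _ _ _ Dgt0 Kz Kz'.
  rewrite opprB addrC subrK enormZ ger0_norm // -/dl => hle.
  by move: hN1; rewrite ltr_pdivrMr // ltNge hle.
have hcov := @cover_chain _ _ _ _ _ hdis.
have hE : K `\` aff w 1 K `<=` aff (- (r^-1 *: m)) (r^-1) B.
  move=> k [Kk nk]; exists (m + r *: k).
    split; first by exists k.
    move=> [k' Kk' hk']; apply: nk; exists (s *: k').
      apply: Kstar => //; rewrite divr_ge0 //= ler_pdivrMr // mul1r //.
    have -> : k = r^-1 *: (r *: k) by rewrite scalerA mulVf ?gt_eqF // scale1r.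
    have -> : r *: k = (m' + r' *: k') - m by rewrite hk' addrAC subrr add0r.
    by rewrite scale1r addrAC scalerDr scalerA [r^-1 * r']mulrC.
  by rewrite scalerDr scalerA mulVf ?gt_eqF // scale1r addKr.
have h1 : (vol K <= n.+1%:R%:E * vol (K `\` aff w 1 K))%E.
  exact: le_trans (@vol_le _ _ _ _ hcov) (@vol_chain _ _ _ _ _).
have h2 : (vol (K `\` aff w 1 K) <= ((r^-1)^+d.+1)%:E * vol B)%E.
  by apply: le_trans (@vol_le _ _ _ _ hE) _; apply: vol_aff; rewrite invr_gt0.
have hN3 : n.+1%:R <= (c + 1) * D * r / del.
  have e1 : 1 <= c * D * r / del by rewrite ler_pdivlMr // mul1r.
  have e2 : D / dl = D * r / del.
    by rewrite dlE invf_div mulrA.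
  rewrite mulrSr; move: hN2; rewrite e2 => hN2.
  have -> : (c + 1) * D * r / del = D * r / del + c * D * r / del.
    by rewrite !mulrDl mul1r addrC.
  exact: lerD.
have hreal : C * n.+1%:R * (r^-1)^+d.+1 <= 1.
  have t0 : 0 <= (r^-1)^+d.+1 by rewrite exprn_ge0 // invr_ge0.
  apply: le_trans (ler_wpM2r t0 (ler_wpM2l (ltW Cgt0) hN3)) _.
  rewrite /C exprVn exprS.
  have rd0 : r ^+ d != 0 by rewrite expf_neq0 // gt_eqF.
  have c1 : c + 1 != 0 by rewrite gt_eqF //; lra.
  have D0 : D != 0 by rewrite gt_eqF.
  have dd0 : del != 0 by rewrite gt_eqF.
  have r00 : r != 0 by rewrite gt_eqF.
  rewrite le_eqVlt; apply/orP; left; apply/eqP.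
  field.
  by rewrite rd0 c1 D0 dd0 r00.
apply: (@le_trans _ _ (C%:E * (n.+1%:R%:E * (((r^-1)^+d.+1)%:E * vol B)))%E).
  rewrite lee_pmul2l // ?lte_fin //; apply: le_trans h1 _.
  by apply: lee_wpmul2l => //; rewrite lee_fin.
rewrite !muleA -!EFinM; apply: (@le_trans _ _ (1%:E * vol B)%E); last by rewrite mul1e.
apply: lee_pmul => //; rewrite lee_fin //.
apply: mulr_ge0; [apply: mulr_ge0; [exact: ltW | exact: ler0n] | by rewrite exprn_ge0 // invr_ge0 ltW].
Qed.
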